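(* Let $N$ be a $(-1,0,1)$-matrix of size $b\times c$ such that each column $\mathbf{n}^j$ satisfies one of: (i) $\sum_{h=1}^b n^j_h=0$; (ii) $b/2$ entries of $\mathbf{n}^j$ equal $1$ and $b/2$ entries equal $0$; (iii) $b/2$ entries equal $-1$ and $b/2$ entries equal $0$; (iv) $\mathbf{n}^j=\mathbf{1}_b$; (v) $\mathbf{n}^j=-\mathbf{1}_b$. Let $\tilde N$ be the matrix obtained from $N$ by replacing each column of type (i) by $-\mathbf{n}^j$, each column of type (ii) by $\mathbf{1}_b-\mathbf{n}^j$, each column of type (iii) by $-\mathbf{1}_b-\mathbf{n}^j$, and leaving columns of types (iv) and (v) unchanged. Let $B$ be a symmetric $b\times b$ matrix with constant row (and column) sums, and let $C$ be a symmetric $c\times c$ matrix. Then the matrices $$M=\begin{pmatrix} B & N\\ N^T & C\end{pmatrix}\quad\text{and}\quad \tilde M=\begin{pmatrix} B & \tilde N\\ \tilde N^T & C\end{pmatrix}$$ are cospectral (have the same characteristic polynomial).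
   Context: $\mathbf{1}_b$ denotes the all-ones column vector of length $b$. *)

(* Defs.v *)
From HB Require Import structures.
From mathcomp Require Import all_boot all_order all_algebra.
Set Implicit Arguments. Unset Strict Implicit. Unset Printing Implicit Defensive.
Import Order.TTheory GRing.Theory Num.Theory.
Local Open Scope ring_scope.

Definition is_m101 (R : numFieldType) (b c : nat) (N : 'M[R]_(b, c)) : Prop :=
  forall i j, N i j \in [:: -1; 0; 1].

Definition cnt (R : numFieldType) (b : nat) (v : 'cV[R]_b) (x : R) : nat :=
  #|[set h : 'I_b | v h 0 == x]|.

Definition col_rule (R : numFieldType) (b : nat) (v w : 'cV[R]_b) : Prop :=
  ((\sum_(h < b) v h 0 = 0) /\ w = - v) \/
  (((cnt v 1).*2 = b)%N /\ ((cnt v 0).*2 = b)%N /\ w = const_mx 1 - v) \/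
  (((cnt v (-1)).*2 = b)%N /\ ((cnt v 0).*2 = b)%N /\ w = - const_mx 1 - v) \/
  (v = const_mx 1 /\ w = v) \/
  (v = - const_mx 1 /\ w = v).

(* Main.v *)
Require Import Defs.
From HB Require Import structures.
From mathcomp Require Import all_boot all_order all_algebra.
From mathcomp Require Import ring zify.
Import Order.TTheory GRing.Theory Num.Theory.
Local Open Scope ring_scope.

Section Aux.
Variable R : realFieldType.

Lemma char_poly_sim n (A P : 'M[R]_n) :
  P *m P = 1%:M -> char_poly (P *m A *m P) = char_poly A.
Proof.
move=> PP; rewrite /char_poly.
set Pp := map_mx polyC P.
have PpPp : Pp *m Pp = 1%:M by rewrite -map_mxM PP map_scalar_mx.
have -> : char_poly_mx (P *m A *m P) = Pp *m char_poly_mx A *m Pp.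
  rewrite /char_poly_mx mulmxBr mulmxBl !map_mxM -/Pp.
  by congr (_ - _); rewrite scalar_mxC -mulmxA PpPp mulmx1.
rewrite !det_mulmx.
have h : \det Pp * \det Pp = 1 by rewrite -det_mulmx PpPp det1.
by rewrite mulrC mulrA h mul1r.
Qed.

Lemma sum_cnt b (v : 'cV[R]_b) x : x != 0 -> ((cnt v x).*2 = b)%N ->
  ((cnt v 0).*2 = b)%N -> \sum_h v h 0 = x *+ cnt v x.
Proof.
rewrite /cnt => hx h1 h0.
set S1 := [set h | v h 0 == x] in h1 *; set S0 := [set h | v h 0 == 0] in h0 *.
have dis : S1 :&: S0 = set0.
  apply/setP=> h; rewrite !inE; case: eqP => // ->.
  by rewrite (negbTE hx).
have cU : #|S1 :|: S0| = b by rewrite cardsU dis cards0 subn0; lia.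
have ST : S1 :|: S0 = setT.
  by apply/eqP; rewrite eqEcard subsetT cardsT card_ord cU leqnn.
have -> : x *+ #|S1| = \sum_(h in S1) x by rewrite sumr_const.
rewrite [RHS]big_mkcond /=; apply: eq_bigr => h _.
have : h \in S1 :|: S0 by rewrite ST inE.
rewrite !inE => /orP[] /eqP ->; first by rewrite eqxx.
by case: ifP => // /eqP <-.
Qed.

End Aux.

Theorem proposition3p4 (R : realFieldType) (b c : nat)
  (N Nt : 'M[R]_(b, c)) (B : 'M[R]_b) (C : 'M[R]_c) :
  is_m101 N ->
  (forall j : 'I_c, col_rule (col j N) (col j Nt)) ->
  B^T = B ->
  (exists r : R, forall i : 'I_b, \sum_(k < b) B i k = r) ->
  C^T = C ->
  char_poly (block_mx B N N^T C) = char_poly (block_mx B Nt Nt^T C).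
Proof.
move=> _ hcol BT [r hr] CT.
case: b N Nt B hcol BT hr => [|b] N Nt B hcol BT hr.
  by rewrite !(flatmx0 N) !(flatmx0 Nt).
set J := const_mx 1 : 'M[R]_b.+1.
set a : R := 2 / b.+1%:R.
have bn0 : b.+1%:R != 0 :> R by rewrite pnatr_eq0.
have ab : a * b.+1%:R = 2 by rewrite /a mulfVK.
set Q := a *: J - 1%:M.
have JJ : J *m J = b.+1%:R *: J.
  apply/matrixP=> i j; rewrite !mxE (eq_bigr (fun _ => 1)).
    by rewrite sumr_const card_ord mulr1.
  by move=> k _; rewrite !mxE mulr1.
have QQ : Q *m Q = 1%:M.
  rewrite /Q mulmxBl !mulmxBr -!scalemxAl -!scalemxAr JJ mulmx1 mul1mx.
  rewrite mul1mx !scalerA -mulrA ab.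
  apply/matrixP=> i j; rewrite !mxE; ring.
have BJ : B *m J = r *: J.
  apply/matrixP=> i j; rewrite !mxE mulr1 -(hr i); apply: eq_bigr => k _.
  by rewrite !mxE mulr1.
have JB : J *m B = r *: J.
  apply/matrixP=> i j; rewrite !mxE mulr1 -(hr j); apply: eq_bigr => k _.
  by rewrite !mxE mul1r -{1}BT mxE.
have BQ : B *m Q = Q *m B.
  by rewrite /Q mulmxBr mulmxBl -scalemxAr -scalemxAl BJ JB mulmx1 mul1mx.
have QT : Q^T = Q by rewrite /Q linearB /= linearZ /= trmx_const trmx1.
have QN : Q *m N = Nt.
  apply/matrixP=> i j.
  have e1 : Nt i j = col j Nt i 0 by rewrite mxE.
  have e2 : N i j = col j N i 0 by rewrite mxE.
  have e3 : \sum_k N k j = \sum_k col j N k 0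
    by apply: eq_bigr => k _; rewrite mxE.
  have -> : (Q *m N) i j = a * \sum_k N k j - N i j.
    rewrite /Q mulmxBl mul1mx -scalemxAl !mxE; congr (_ * _ - _).
    by apply: eq_bigr => k _; rewrite !mxE mul1r.
  rewrite e1 e2 e3.
  case: (hcol j) => [[-> ->]|[[h1 [h0 ->]]|[[h1 [h0 ->]]|[[-> ->]|[-> ->]]]]].
  - by rewrite !mxE mulr0 sub0r.
  - rewrite (sum_cnt _ _ _ _ (oner_neq0 R) h1 h0) !mxE.
    have hk : a * (cnt (col j N) 1)%:R = 1.
      have h2 : (2 : R) != 0 by rewrite pnatr_eq0.
      apply: (mulIf h2); rewrite mul1r -mulrA -natrM muln2 h1 ab //.
    by rewrite hk.
  - have hm : (-1 : R) != 0 by rewrite oppr_eq0 oner_neq0.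
    rewrite (sum_cnt _ _ _ _ hm h1 h0) !mxE.
    have hk : a * (cnt (col j N) (-1))%:R = 1.
      have h2 : (2 : R) != 0 by rewrite pnatr_eq0.
      apply: (mulIf h2); rewrite mul1r -mulrA -natrM muln2 h1 ab //.
    by rewrite mulNrn mulrN hk.
  - rewrite !mxE (eq_bigr (fun _ => 1)); last by move=> k _; rewrite !mxE.
    rewrite sumr_const card_ord ab; ring.
  - rewrite !mxE (eq_bigr (fun _ => -1)); last by move=> k _; rewrite !mxE.
    rewrite sumr_const card_ord mulNrn mulrN ab; ring.
pose P := block_mx Q 0 0 (1%:M : 'M[R]_c).
have PP : P *m P = 1%:M.
  rewrite /P mulmx_block QQ !mulmx0 !mul0mx !addr0 !add0r mulmx1.
  by rewrite -scalar_mx_block.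
rewrite -(char_poly_sim _ _ (block_mx B N N^T C) _ PP).
congr char_poly.
rewrite /P !mulmx_block !mulmx0 !mul0mx !addr0 !add0r !mulmx1 !mul1mx.
rewrite -BQ -mulmxA QQ mulmx1 QN.
have -> : N^T *m Q = Nt^T by rewrite -QN trmx_mul QT.
by [].
Qed.
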